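(* Let $\alpha_0\subset\alpha$ meet every orbit of $\tau$ in exactly one element. A section $u=\{u(a)\in R_a\pi\}_{a\in\alpha_0}$ is the restriction to $\alpha_0$ of the self-linking function $u^w$ of some nanoword $w$ over $\alpha$ if and only if it is skew-symmetric, i.e. $\delta_a(u(a))=\partial_a(u(a))=0$ for all $a\in\alpha_0$ and $\partial_a(u(b))+\partial_b(u(a))=0$ for all $a,b\in\alpha_0$.
   Context: Fix a set $\alpha$ with an involution $\tau$. A nanoword over $\alpha$ is a pair $(\mathcal A,w)$ with $\mathcal A$ a finite set with a map $A\mapsto|A|\in\alpha$ and $w$ a word in which each letter of $\mathcal A$ occurs exactly twice. Let $\pi$ be the multiplicative abelian group generated by the elements of $\alpha$ with relations $a\,\tau(a)=1$ ($a\in\alpha$). For $A,B\in\mathcal A$ let $n_w(A,B)=1$ if $w=\cdots A\cdots B\cdots A\cdots B\cdots$, $-1$ if $w=\cdots B\cdots A\cdots B\cdots A\cdots$, and $0$ otherwise; $[A]_w=\prod_{B}|B|^{n_w(A,B)}\in\pi$; $[a]_w=\sum_{A:\,[A]_w\neq1,\,|A|=a}[A]_w\in\mathbb Z\pi$. For $a\in\alpha$ let $R_a=\mathbb Z/2\mathbb Z$ if $\tau(a)=a$ and $R_a=\mathbb Z$ otherwise. The self-linking function of $w$ is $u^w(a)=[a]_w\bmod 2\in R_a\pi$ if $\tau(a)=a$ and $u^w(a)=[a]_w-[\tau(a)]_w\in R_a\pi$ if $\tau(a)\neq a$. A section is any family $u=\{u(a)\in R_a\pi\}_{a\in\alpha_0}$.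 Every element of $\pi$ is written $\prod_{b\in\alpha_0}b^{m_b}$ with $m_b\in\mathbb Z$ determined uniquely if $\tau(b)\ne b$ and modulo 2 if $\tau(b)=b$. For $a,b\in\alpha_0$ let $R_{a,b}=\mathbb Z$ if $\tau(a)\neq a$ and $\tau(b)\neq b$, and $R_{a,b}=\mathbb Z/2\mathbb Z$ otherwise. Let $\delta_a:R_a\pi\to R_a$ be the additive map sending $1\in\pi$ to $1$ and all other elements of $\pi$ to $0$, and $\partial_b:R_a\pi\to R_{a,b}$ the additive map sending $\prod_{c\in\alpha_0}c^{m_c}$ to $m_b$. *)

(* Defs.v *)
From mathcomp Require Import all_boot all_order all_algebra.
Set Implicit Arguments. Unset Strict Implicit. Unset Printing Implicit Defensive.
Import GRing.Theory Num.Theory.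
Local Open Scope ring_scope.

(* Coefficient rings R_a and R_{a,b}, represented by integer
   representatives: equality in R_a is equality in Z if tau a <> a and
   congruence mod 2 if tau a = a.                                          *)
Definition eqR (alpha : finType) (tau : alpha -> alpha) (a : alpha) (x y : int) : bool :=
  if tau a == a then (x == y %[mod 2])%Z else x == y.

Definition eqRR (alpha : finType) (tau : alpha -> alpha) (a b : alpha) (x y : int) : bool :=
  if (tau a != a) && (tau b != b) then x == y else (x == y %[mod 2])%Z.

(* Elements of pi are written prod_{b in alpha0} b^{m_b}; we represent them
   by exponent vectors m : alpha -> int (entries outside alpha0 ignored). *)
Definition piT (alpha : finType) := {ffun alpha -> int}.

Definition pi_eq (alpha : finType) (tau : alpha -> alpha) (alpha0 : {set alpha})
  (m m' : piT alpha) : bool :=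
  [forall b in alpha0, eqR tau b (m b) (m' b)].

Definition pi_one (alpha : finType) : piT alpha := [ffun => 0].

(* the element a of pi, for a in alpha, written in the alpha0-normal form *)
Definition gen (alpha : finType) (tau : alpha -> alpha) (alpha0 : {set alpha})
  (a : alpha) : piT alpha :=
  [ffun b => if a \in alpha0 then ((b == a) : nat)%:Z else - ((b == tau a) : nat)%:Z].

(* Elements of the group ring R_a pi, as formal finite sums sum c_i g_i. *)
Definition grpring (alpha : finType) := seq (piT alpha * int).

Definition coef (alpha : finType) (tau : alpha -> alpha) (alpha0 : {set alpha})
  (x : grpring alpha) (g : piT alpha) : int :=
  \sum_(e <- x | pi_eq tau alpha0 e.1 g) e.2.

Definition gr_eq (alpha : finType) (tau : alpha -> alpha) (alpha0 : {set alpha})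
  (a : alpha) (x y : grpring alpha) : Prop :=
  forall g : piT alpha, eqR tau a (coef tau alpha0 x g) (coef tau alpha0 y g).

Definition delta (alpha : finType) (tau : alpha -> alpha) (alpha0 : {set alpha})
  (x : grpring alpha) : int := coef tau alpha0 x (pi_one alpha).

Definition partial (alpha : finType) (b : alpha) (x : grpring alpha) : int :=
  \sum_(e <- x) e.2 * e.1 b.

(* Nanowords: a finite set A (a finType), a map lab : A -> alpha, and a
   word w in which each letter of A occurs exactly twice. *)
Definition is_nanoword (A : finType) (w : seq A) : bool :=
  [forall X : A, count_mem X w == 2%N].

Definition nw (A : finType) (w : seq A) (X Y : A) : int :=
  (subseq [:: X; Y; X; Y] w : nat)%:Z - (subseq [:: Y; X; Y; X] w : nat)%:Z.

Definition letter_class (alpha : finType) (tau : alpha -> alpha) (alpha0 : {set alpha})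
  (A : finType) (lab : A -> alpha) (w : seq A) (X : A) : piT alpha :=
  [ffun b => \sum_(Y : A) nw w X Y * gen tau alpha0 (lab Y) b].

Definition bracket (alpha : finType) (tau : alpha -> alpha) (alpha0 : {set alpha})
  (A : finType) (lab : A -> alpha) (w : seq A) (a : alpha) : grpring alpha :=
  [seq (letter_class tau alpha0 lab w X, 1)
     | X <- [seq X <- enum A | (lab X == a)
                 && ~~ pi_eq tau alpha0 (letter_class tau alpha0 lab w X) (pi_one alpha)]].

Definition selflink (alpha : finType) (tau : alpha -> alpha) (alpha0 : {set alpha})
  (A : finType) (lab : A -> alpha) (w : seq A) (a : alpha) : grpring alpha :=
  if tau a == a then bracket tau alpha0 lab w a
  else bracket tau alpha0 lab w a
       ++ [seq (e.1, - e.2) | e <- bracket tau alpha0 lab w (tau a)].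

Definition realizable (alpha : finType) (tau : alpha -> alpha) (alpha0 : {set alpha})
  (u : alpha -> grpring alpha) : Prop :=
  exists (A : finType) (lab : A -> alpha) (w : seq A),
    is_nanoword w /\
    forall a, a \in alpha0 -> gr_eq tau alpha0 a (u a) (selflink tau alpha0 lab w a).

Definition skew_symmetric (alpha : finType) (tau : alpha -> alpha) (alpha0 : {set alpha})
  (u : alpha -> grpring alpha) : Prop :=
  (forall a, a \in alpha0 ->
     eqR tau a (delta tau alpha0 (u a)) 0 /\ eqRR tau a a (partial a (u a)) 0) /\
  (forall a b, a \in alpha0 -> b \in alpha0 ->
     eqRR tau a b (partial a (u b) + partial b (u a)) 0).

(* Main.v *)
Require Import Defs.
From mathcomp Require Import all_boot all_order all_algebra.
From mathcomp Require Import ring.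
Set Implicit Arguments. Unset Strict Implicit. Unset Printing Implicit Defensive.
Import GRing.Theory Num.Theory.
Local Open Scope ring_scope.

Section Basics.
Variable alpha : finType.
Variable tau : alpha -> alpha.
Variable alpha0 : {set alpha}.
Hypothesis tauK : involutive tau.
Hypothesis hL : forall a : alpha, #|alpha0 :&: [set a; tau a]| = 1%N.

Definition md (a : alpha) : int := if tau a == a then 2 else 0.
Definition mdd (a b : alpha) : int := if (tau a != a) && (tau b != b) then 0 else 2.

Lemma eqR_dvd a x y : eqR tau a x y = (md a %| x - y)%Z.
Proof.
rewrite /eqR /md; case: ifP => _; first by rewrite eqz_mod_dvd.
by rewrite dvd0z subr_eq0.
Qed.

Lemma eqRR_dvd a b x y : eqRR tau a b x y = (mdd a b %| x - y)%Z.
Proof.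
rewrite /eqRR /mdd; case: ifP => _; last by rewrite eqz_mod_dvd.
by rewrite dvd0z subr_eq0.
Qed.

Lemma dvdz_sub_sym m x y : (m %| x - y)%Z = (m %| y - x)%Z.
Proof. by rewrite -opprB rpredN. Qed.

Lemma dvdz_sub_trans m x y z : (m %| x - y)%Z -> (m %| y - z)%Z -> (m %| x - z)%Z.
Proof.
move=> h1 h2; have -> : x - z = (x - y) + (y - z) by rewrite addrA subrK.
exact: rpredD.
Qed.

Lemma dvdz_sum (I : Type) (r : seq I) (P : pred I) (F : I -> int) m :
  (forall i, P i -> (m %| F i)%Z) -> (m %| \sum_(i <- r | P i) F i)%Z.
Proof.
move=> h; exact: rpred_sum.
Qed.

Definition peq := pi_eq tau alpha0.

Lemma peq_refl g : peq g g.
Proof. by apply/forall_inP => b _; rewrite eqR_dvd subrr dvdz0. Qed.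

Lemma peq_sym g h : peq g h = peq h g.
Proof.
by apply/forall_inP/forall_inP => H b Hb; move: (H b Hb); rewrite !eqR_dvd dvdz_sub_sym.
Qed.

Lemma peq_trans g h k : peq g h -> peq h k -> peq g k.
Proof.
move=> /forall_inP H1 /forall_inP H2; apply/forall_inP => b Hb.
move: (H1 b Hb) (H2 b Hb); rewrite !eqR_dvd; exact: dvdz_sub_trans.
Qed.

Lemma peq_trans_eq g h k : peq h k -> peq g h = peq g k.
Proof.
move=> hk; apply/idP/idP => H; first exact: peq_trans hk.
by apply: peq_trans H _; rewrite peq_sym.
Qed.

Lemma coef_peq (x : grpring alpha) g g' : peq g g' -> coef tau alpha0 x g = coef tau alpha0 x g'.
Proof.
move=> hg; rewrite /coef; apply: eq_bigl => e.
rewrite -/peq; by rewrite (peq_trans_eq _ hg).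
Qed.

End Basics.

Definition bz (b : bool) : int := (b : nat)%:Z.

Section Words.
Variable alpha : finType.
Variable tau : alpha -> alpha.
Variable alpha0 : {set alpha}.

Definition sgn (a y : alpha) : int :=
  bz (y == a) - (if tau a == a then 0 else bz (y == tau a)).

Definition Fw (A : finType) (lab : A -> alpha) (w : seq A) (a : alpha) (x : piT alpha) : int :=
  \sum_(X : A) sgn a (lab X) * bz (peq tau alpha0 (letter_class tau alpha0 lab w X) x).

Lemma coef_bracket (A : finType) (lab : A -> alpha) (w : seq A) c x :
  ~~ peq tau alpha0 x (pi_one alpha) ->
  coef tau alpha0 (bracket tau alpha0 lab w c) x =
  \sum_(X : A) bz (lab X == c) * bz (peq tau alpha0 (letter_class tau alpha0 lab w X) x).
Proof.
move=> nx; rewrite /coef /bracket big_map big_filter_cond /=.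
rewrite enumT [index_enum A]unlock -big_filter_cond.
rewrite big_filter_cond /=.
rewrite big_mkcond /= [RHS]big_mkcond /=; apply: eq_bigr => X _.
set C := letter_class tau alpha0 lab w X.
case: (lab X == c) => /=; last by rewrite mul0r.
rewrite mul1r /bz -/(peq tau alpha0 C x) -/(peq tau alpha0 C (pi_one alpha)).
case hp: (peq tau alpha0 C x); rewrite ?andbF ?andbT //.
have -> // : ~~ peq tau alpha0 C (pi_one alpha).
apply: contra nx => h; rewrite peq_sym in hp; exact: peq_trans hp h.
Qed.


Lemma coef_cat (y z : grpring alpha) g :
  coef tau alpha0 (y ++ z) g = coef tau alpha0 y g + coef tau alpha0 z g.
Proof. by rewrite /coef big_cat. Qed.

Lemma coef_neg (y : grpring alpha) g :
  coef tau alpha0 [seq (e.1, - e.2) | e <- y] g = - coef tau alpha0 y g.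
Proof. by rewrite /coef big_map /= sumrN. Qed.

Lemma coef_selflink (A : finType) (lab : A -> alpha) (w : seq A) a x :
  ~~ peq tau alpha0 x (pi_one alpha) ->
  coef tau alpha0 (selflink tau alpha0 lab w a) x = Fw lab w a x.
Proof.
move=> nx; rewrite /selflink /Fw /sgn.
case: ifP => ha.
  rewrite coef_bracket //; apply: eq_bigr => X _; by rewrite subr0.
rewrite coef_cat coef_neg !coef_bracket // -sumrB; apply: eq_bigr => X _.
by rewrite mulrBl.
Qed.

End Words.

Lemma subseq_map_inj (T U : eqType) (f : T -> U) (s1 s2 : seq T) :
  injective f -> subseq (map f s1) (map f s2) = subseq s1 s2.
Proof.
move=> injf; apply/idP/idP; last exact: map_subseq.

case/subseqP => m sz e; apply/subseqP; exists m; first by rewrite sz size_map.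
apply: (inj_map injf); by rewrite e map_mask.
Qed.

Section NW.
Variable A : finType.

Lemma nw_filter (w : seq A) X Y : nw w X Y = nw (filter (pred2 X Y) w) X Y.
Proof. by rewrite /nw !subseq_filter /= !eqxx /= !orbT. Qed.

Lemma nw_anti (w : seq A) X Y : nw w Y X = - nw w X Y.
Proof. by rewrite /nw opprB. Qed.

Lemma nw_self (w : seq A) X : nw w X X = 0.
Proof. by rewrite /nw subrr. Qed.

Lemma nw_rev (w : seq A) X Y : nw (rev w) X Y = - nw w X Y.
Proof.
rewrite /nw -(subseq_rev [:: X; Y; X; Y]) -(subseq_rev [:: Y; X; Y; X]) !revK /=.
by rewrite /rev /= opprB.
Qed.

Ltac nwsimp hXY hYX := rewrite /nw /=; do 8 (rewrite ?eqxx ?hXY ?hYX /=).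

Lemma nw_XYXY (X Y : A) : X != Y -> nw [:: X; Y; X; Y] X Y = 1.
Proof.
move=> nXY; have hXY := negbTE nXY; have hYX : (Y == X) = false by rewrite eq_sym.
by nwsimp hXY hYX.
Qed.

Lemma nw_YXYX (X Y : A) : X != Y -> nw [:: Y; X; Y; X] X Y = -1.
Proof.
move=> nXY; have hXY := negbTE nXY; have hYX : (Y == X) = false by rewrite eq_sym.
by nwsimp hXY hYX.
Qed.

Lemma nw_XXYY (X Y : A) : X != Y -> nw [:: X; X; Y; Y] X Y = 0.
Proof.
move=> nXY; have hXY := negbTE nXY; have hYX : (Y == X) = false by rewrite eq_sym.
by nwsimp hXY hYX.
Qed.

Lemma nw_nest (X Y q0 q1 : A) : q0 \in [:: X; Y] -> q1 \in [:: X; Y] ->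
  nw [:: q0; q1; q1; q0] X Y = 0.
Proof.
have [->|nXY] := eqVneq X Y; first by rewrite nw_self.
have hXY := negbTE nXY; have hYX : (Y == X) = false by rewrite eq_sym.
by rewrite !inE => /orP[]/eqP-> /orP[]/eqP->; nwsimp hXY hYX.
Qed.

End NW.

Lemma nw_map_inj (A B : finType) (f : A -> B) (w : seq A) X Y :
  injective f -> nw (map f w) (f X) (f Y) = nw w X Y.
Proof.
move=> injf; rewrite /nw.
by rewrite -(subseq_map_inj [:: X; Y; X; Y] w injf) -(subseq_map_inj [:: Y; X; Y; X] w injf).
Qed.

Lemma filter_pred1_nseq (T : eqType) (x : T) s : filter (pred1 x) s = nseq (count_mem x s) x.
Proof.
rewrite -size_filter; apply/all_pred1P.
by apply/allP => y; rewrite mem_filter => /andP[].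
Qed.

Lemma count_map_inj (T U : eqType) (f : T -> U) s x : injective f ->
  count_mem (f x) (map f s) = count_mem x s.
Proof. by move=> injf; rewrite count_map; apply: eq_count => y /=; rewrite inj_eq. Qed.

Lemma count_map_out (T U : eqType) (f : T -> U) s y : (forall z, f z != y) ->
  count_mem y (map f s) = 0%N.
Proof.
move=> h; rewrite count_map -(count_pred0 s); apply: eq_count => z /=.
by rewrite (negbTE (h z)).
Qed.

Lemma filter_map_out (T U : eqType) (f : T -> U) s (p : pred U) : (forall z, ~~ p (f z)) ->
  filter p (map f s) = [::].
Proof.
move=> h; rewrite filter_map.
have -> : filter (preim f p) s = [::].
  by rewrite -(filter_pred0 s); apply: eq_filter => z /=; apply: negbTE.
by [].
Qed.

Section Closure.
Variable alpha : finType.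
Variable tau : alpha -> alpha.
Variable alpha0 : {set alpha}.
Hypothesis tauK : involutive tau.
Hypothesis hL : forall a : alpha, #|alpha0 :&: [set a; tau a]| = 1%N.

Local Notation peq := (peq tau alpha0).
Local Notation md := (md tau).
Local Notation Fw := (Fw tau alpha0).
Local Notation sgn := (sgn tau).

Definition Rf (f : alpha -> piT alpha -> int) : Prop :=
  exists (A : finType) (lab : A -> alpha) (w : seq A), is_nanoword w /\
    forall a, a \in alpha0 -> forall x, ~~ peq x (pi_one alpha) ->
      (md a %| f a x - Fw lab w a x)%Z.

Lemma RfE f g : Rf f -> (forall a, a \in alpha0 -> forall x, (md a %| f a x - g a x)%Z) -> Rf g.
Proof.
case=> A [lab [w [nw hw]]] hfg; exists A, lab, w; split => // a ha x nx.
have h1 := hw a ha x nx; have h2 := hfg a ha x.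
rewrite dvdz_sub_sym in h2; exact: (dvdz_sub_trans h2 h1).
Qed.

Lemma Rf0 : Rf (fun _ _ => 0).
Proof.
exists void, (fun v : void => match v with end), [::]; split.
  by apply/forallP => [[]].
move=> a _ x _; rewrite /Fw big1 ?subrr ?dvdz0 //; by case.
Qed.

Section Sum.
Variables (A1 A2 : finType) (lab1 : A1 -> alpha) (lab2 : A2 -> alpha).
Variables (w1 : seq A1) (w2 : seq A2).
Hypotheses (hw1 : is_nanoword w1) (hw2 : is_nanoword w2).

Definition labS (z : A1 + A2) : alpha := match z with inl x => lab1 x | inr y => lab2 y end.
Definition wS : seq (A1 + A2) := map inl w1 ++ map inr w2.

Lemma wS_nano : is_nanoword wS.
Proof.
apply/forallP => [[x|y]]; rewrite /wS count_cat.
  by rewrite count_map_inj; last exact: inl_inj; rewrite count_map_out // (eqP (forallP hw1 x)).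
rewrite count_map_out // count_map_inj; last exact: inr_inj.
by rewrite (eqP (forallP hw2 y)).
Qed.

Lemma nwS_ll x x' : nw wS (inl x) (inl x') = nw w1 x x'.
Proof.
rewrite nw_filter /wS filter_cat (filter_map_out (f := inr)) ?cats0 //.
by rewrite -nw_filter nw_map_inj //; exact: inl_inj.
Qed.

Lemma nwS_rr y y' : nw wS (inr y) (inr y') = nw w2 y y'.
Proof.
rewrite nw_filter /wS filter_cat (filter_map_out (f := inl)) //=.
by rewrite -nw_filter nw_map_inj //; exact: inr_inj.
Qed.

Lemma inl_inr (x : A1) (y : A2) : (inl x == inr y :> A1 + A2) = false.
Proof. by []. Qed.
Lemma inr_inl (x : A1) (y : A2) : (inr y == inl x :> A1 + A2) = false.
Proof. by []. Qed.
Lemma inl_eq (x x' : A1) : (inl x == inl x' :> A1 + A2) = (x == x').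
Proof. by []. Qed.
Lemma inr_eq (y y' : A2) : (inr y == inr y' :> A1 + A2) = (y == y').
Proof. by []. Qed.

Lemma nwS_lr x y : nw wS (inl x) (inr y) = 0.
Proof.
rewrite nw_filter /wS filter_cat !filter_map.
have -> : filter (preim inl (pred2 (inl x) (inr y))) w1 = filter (pred1 x) w1.
  by apply: eq_filter => z /=; rewrite inl_inr orbF inl_eq.
have -> : filter (preim inr (pred2 (inl x) (inr y))) w2 = filter (pred1 y) w2.
  by apply: eq_filter => z /=; rewrite inr_eq.
rewrite !filter_pred1_nseq.
by rewrite (eqP (forallP hw1 x)) (eqP (forallP hw2 y)) /= nw_XXYY.
Qed.

Lemma nwS_rl x y : nw wS (inr y) (inl x) = 0.
Proof. by rewrite nw_anti nwS_lr oppr0. Qed.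

Lemma classS_l x : letter_class tau alpha0 labS wS (inl x) = letter_class tau alpha0 lab1 w1 x.
Proof.
apply/ffunP => b; rewrite !ffunE big_sumType /=.
rewrite [X in _ + X]big1 ?addr0; last by move=> y _; rewrite nwS_lr mul0r.
by apply: eq_bigr => y _; rewrite nwS_ll.
Qed.

Lemma classS_r y : letter_class tau alpha0 labS wS (inr y) = letter_class tau alpha0 lab2 w2 y.
Proof.
apply/ffunP => b; rewrite !ffunE big_sumType /=.
rewrite [X in X + _]big1 ?add0r; last by move=> x _; rewrite nwS_rl mul0r.
by apply: eq_bigr => y' _; rewrite nwS_rr.
Qed.

Lemma FwS a x : Fw labS wS a x = Fw lab1 w1 a x + Fw lab2 w2 a x.
Proof.
rewrite /Fw big_sumType /=; congr (_ + _); apply: eq_bigr => z _.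
  by rewrite classS_l.
by rewrite classS_r.
Qed.

End Sum.

Lemma RfD f g : Rf f -> Rf g -> Rf (fun a x => f a x + g a x).
Proof.
case=> A1 [lab1 [w1 [n1 h1]]] [A2 [lab2 [w2 [n2 h2]]]].
exists (A1 + A2)%type, (labS lab1 lab2), (wS w1 w2); split; first exact: wS_nano.
move=> a ha x nx; rewrite FwS //.
have -> : f a x + g a x - (Fw lab1 w1 a x + Fw lab2 w2 a x) =
  (f a x - Fw lab1 w1 a x) + (g a x - Fw lab2 w2 a x) by rewrite opprD addrACA.
by apply: rpredD; [apply: h1 | apply: h2].
Qed.


Lemma peq_l g g' x : peq g g' -> peq g x = peq g' x.
Proof.
move=> h; rewrite peq_sym [peq g' x]peq_sym; apply: peq_trans_eq.
exact: h.
Qed.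

Lemma Lor a : (a \in alpha0) || (tau a \in alpha0).
Proof.
have : (0 < #|alpha0 :&: [set a; tau a]|)%N by rewrite hL.
case/card_gt0P => z; rewrite inE => /andP[hz]; rewrite !inE => /orP[]/eqP <-;
by rewrite hz ?orbT.
Qed.

Lemma Lboth a : a \in alpha0 -> tau a \in alpha0 -> tau a = a.
Proof.
move=> h1 h2; apply/eqP; apply/negPn/negP => ne.
have := hL a; have -> : alpha0 :&: [set a; tau a] = [set a; tau a].
  apply/setIidPr; apply/subsetP => z; rewrite !inE => /orP[]/eqP->//.
by rewrite cards2 eq_sym ne.
Qed.

Lemma gen_tau b y : b \in alpha0 -> (md b %| gen tau alpha0 (tau y) b + gen tau alpha0 y b)%Z.
Proof.
move=> hb; rewrite /gen !ffunE tauK.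
case hy: (y \in alpha0); case hty: (tau y \in alpha0).
- have ty := Lboth hy hty; rewrite ty.
  case: (eqVneq b y) => [eby|nby]; last by rewrite /= dvdz0.
  rewrite /md eby ty eqxx /=; exact: dvdzz.
- by case: (b == y) => /=; rewrite ?dvdz0.
- by case: (b == tau y) => /=; rewrite ?dvdz0.
- by move: (Lor y); rewrite hy hty.
Qed.

Lemma sgn_tau a y : (md a %| sgn a (tau y) + sgn a y)%Z.
Proof.
rewrite /sgn /md (inj_eq (can_inj tauK)) (inv_eq tauK).
case: ifP => ha.
  rewrite !subr0 (eqP ha); case: (y == a) => /=; [exact: dvdzz|exact: dvdz0].
by rewrite addrC addrA subrK subrr dvdz0.
Qed.

Lemma classN (A : finType) (lab : A -> alpha) (w : seq A) X :
  peq (letter_class tau alpha0 (tau \o lab) (rev w) X) (letter_class tau alpha0 lab w X).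
Proof.
apply/forall_inP => b hb; rewrite eqR_dvd !ffunE -sumrB rpred_sum // => Y _.
rewrite nw_rev /= mulNr -opprD -mulrDr rpredN.
exact: dvdz_mull (gen_tau _ hb).
Qed.

Lemma RfN f : Rf f -> Rf (fun a x => - f a x).
Proof.
case=> A [lab [w [nw0 hw]]]; exists A, (tau \o lab), (rev w); split.
  by apply/forallP => X; rewrite count_rev (forallP nw0 X).
move=> a ha x nx.
have -> : - f a x - Fw (tau \o lab) (rev w) a x =
   - (f a x - Fw lab w a x) - (Fw (tau \o lab) (rev w) a x + Fw lab w a x).
  by ring.
apply: rpredB; first by rewrite rpredN; apply: hw.
rewrite /Fw -big_split rpred_sum // => X _ /=.
rewrite (peq_l _ (classN lab w X)) -mulrDl.
exact: dvdz_mulr (sgn_tau _ _).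
Qed.

Lemma RfM f (k : int) : Rf f -> Rf (fun a x => k * f a x).
Proof.
move=> hf.
have hn : forall n : nat, Rf (fun a x => n%:Z * f a x).
  elim=> [|n IH]; first by apply: (RfE Rf0) => a _ x; rewrite mul0r subrr dvdz0.
  by apply: (RfE (RfD hf IH)) => a _ x; rewrite intS mulrDl mul1r subrr dvdz0.
case: k => m; first exact: hn.
apply: (RfE (RfN (hn m.+1))) => a _ x.
by rewrite NegzE mulNr subrr dvdz0.
Qed.

Lemma Rf_sum (I : Type) (r : seq I) (F : I -> alpha -> piT alpha -> int) :
  (forall i, Rf (F i)) -> Rf (fun a x => \sum_(i <- r) F i a x).
Proof.
move=> hF; elim: r => [|i r IH].
  by apply: (RfE Rf0) => a _ x; rewrite big_nil subrr dvdz0.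
by apply: (RfE (RfD (hF i) IH)) => a _ x; rewrite big_cons subrr dvdz0.
Qed.

End Closure.

Section BlockWord.
Variable A : finType.

Lemma filter_nil (s : seq A) (p : pred A) : (forall z, z \in s -> ~~ p z) -> filter p s = [::].
Proof.
move=> h; rewrite -(filter_pred0 s); apply: eq_in_filter => z /h; exact: negbTE.
Qed.

Lemma f0 (s : seq A) y z : y \notin s -> z \notin s -> filter (pred2 y z) s = [::].
Proof.
move=> hy hz; apply: filter_nil => v hv /=; apply/negP => /orP[]/eqP e; subst v.
  by rewrite hv in hy.
by rewrite hv in hz.
Qed.

Lemma f1 (s : seq A) y z : uniq s -> y \in s -> z \notin s ->
  filter (pred2 y z) s = [:: y] /\ filter (pred2 z y) s = [:: y].
Proof.
move=> us hy hz.
have e : forall v, v \in s -> (v == z) = false.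
  by move=> v hv; apply/negbTE; apply: contraNneq hz => <-.
split; rewrite -(filter_pred1_uniq us hy); apply: eq_in_filter => v hv /=;
by rewrite e ?orbF.
Qed.

Lemma nw_small (q : seq A) Y Z : (size q < 4)%N -> nw q Y Z = 0.
Proof.
move=> hq; rewrite /nw.
have h : forall r : seq A, size r = 4%N -> subseq r q = false.
  move=> r sr; apply/negP => /size_subseq; rewrite sr; by rewrite leqNgt hq.
by rewrite !h.
Qed.

Lemma nw_sym_q (q : seq A) Y Z : uniq q -> {subset q <= [:: Y; Z]} -> nw (q ++ rev q) Y Z = 0.
Proof.
move=> uq sq.
have sz : (size q <= 2)%N.
  by have := uniq_leq_size uq sq.
case: q uq sq sz => [|q0 [|q1 [|q2 r]]] uq sq sz; try by rewrite nw_small.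
rewrite /rev /=; apply: nw_nest; apply: sq; by rewrite !inE eqxx ?orbT.
Qed.

Variables (s t : seq A) (X : A).
Hypotheses (ust : uniq (s ++ t)) (Xst : X \notin s ++ t).
Definition bw := s ++ X :: rev s ++ t ++ X :: rev t.

Lemma us : uniq s. Proof using ust Xst. by move: ust; rewrite cat_uniq => /andP[]. Qed.
Lemma ut : uniq t. Proof using ust Xst. by move: ust; rewrite cat_uniq => /and3P[]. Qed.
Lemma Xs : X \notin s. Proof using ust Xst. by move: Xst; rewrite mem_cat negb_or => /andP[]. Qed.
Lemma Xt : X \notin t. Proof using ust Xst. by move: Xst; rewrite mem_cat negb_or => /andP[]. Qed.
Lemma st Y : Y \in s -> Y \notin t.
Proof using ust Xst.
move=> hY; move: ust; rewrite cat_uniq => /and3P[_ /hasPn h _].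
by apply/negP => /h; rewrite hY.
Qed.
Lemma ts Y : Y \in t -> Y \notin s.
Proof using ust Xst. by move=> hY; apply/negP => /st; rewrite hY. Qed.

Lemma bw_count_X : count_mem X bw = 2%N.
Proof using ust Xst.
rewrite /bw; do 3 rewrite ?count_cat /= ?count_rev; rewrite eqxx.
have /count_memPn -> := Xs; have /count_memPn -> := Xt; by [].
Qed.

Lemma bw_count_s Y : Y \in s -> count_mem Y bw = 2%N.
Proof using ust Xst.
move=> hY; rewrite /bw; do 3 rewrite ?count_cat /= ?count_rev.
have /count_memPn -> := st hY.
rewrite (count_uniq_mem _ us) hY.
have -> : (X == Y) = false by apply/negbTE; apply: contraNneq Xs => ->.
by [].
Qed.

Lemma bw_count_t Y : Y \in t -> count_mem Y bw = 2%N.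
Proof using ust Xst.
move=> hY; rewrite /bw; do 3 rewrite ?count_cat /= ?count_rev.
have /count_memPn -> := ts hY.
rewrite (count_uniq_mem _ ut) hY.
have -> : (X == Y) = false by apply/negbTE; apply: contraNneq Xt => ->.
by [].
Qed.

Ltac fsimp := rewrite nw_filter /bw; do 3 rewrite ?filter_cat /= ?filter_rev.

Lemma Xne_s Y : Y \in s -> (X == Y) = false.
Proof using ust Xst. by move=> hY; apply/negbTE; apply: contraNneq Xs => ->. Qed.
Lemma Xne_t Y : Y \in t -> (X == Y) = false.
Proof using ust Xst. by move=> hY; apply/negbTE; apply: contraNneq Xt => ->. Qed.

Lemma bw_Xs Y : Y \in s -> nw bw X Y = -1.
Proof using ust Xst.
move=> hY; fsimp; rewrite eqxx /=.
have [e1 e2] := f1 us hY Xs; rewrite ?e1 ?e2.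
rewrite f0 ?Xt ?st //= nw_YXYX //.
by rewrite Xne_s.
Qed.

Lemma bw_Xt Y : Y \in t -> nw bw X Y = 1.
Proof using ust Xst.
move=> hY; fsimp; rewrite eqxx /=.
have [e1 e2] := f1 ut hY Xt; rewrite ?e1 ?e2.
rewrite f0 ?Xs ?ts //= nw_XYXY //.
by rewrite Xne_t.
Qed.

Lemma bw_ss Y Z : Y \in s -> Z \in s -> nw bw Y Z = 0.
Proof using ust Xst.
move=> hY hZ; fsimp; rewrite (Xne_s hY) (Xne_s hZ) /=.
rewrite (f0 (s := t)) ?st //= cats0.
apply: nw_sym_q; first exact: filter_uniq us.
by move=> v; rewrite mem_filter !inE => /andP[].
Qed.

Lemma bw_tt Y Z : Y \in t -> Z \in t -> nw bw Y Z = 0.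
Proof using ust Xst.
move=> hY hZ; fsimp; rewrite (Xne_t hY) (Xne_t hZ) /=.
rewrite (f0 (s := s)) ?ts //=.
apply: nw_sym_q; first exact: filter_uniq ut.
by move=> v; rewrite mem_filter !inE => /andP[].
Qed.

Lemma bw_st Y Z : Y \in s -> Z \in t -> nw bw Y Z = 0.
Proof using ust Xst.
move=> hY hZ; fsimp; rewrite (Xne_s hY) (Xne_t hZ) /=.
have [e1 e2] := f1 us hY (ts hZ); have [e3 e4] := f1 ut hZ (st hY).
rewrite ?e1 ?e2 ?e3 ?e4.
rewrite /= nw_XXYY //; by apply: contraTneq hZ => <-; apply: st.
Qed.

End BlockWord.

Lemma sum_unit (F : unit -> int) : \sum_(u : unit) F u = F tt.
Proof. by rewrite (big_pred1 tt) // => [[]]. Qed.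

Lemma sum_nth (T : Type) (x0 : T) (r : seq T) (F : T -> int) :
  \sum_(i < size r) F (nth x0 r i) = \sum_(y <- r) F y.
Proof. by rewrite (big_nth x0) big_mkord. Qed.

Section Block.
Variable alpha : finType.
Variable tau : alpha -> alpha.
Variable alpha0 : {set alpha}.
Hypothesis tauK : involutive tau.
Hypothesis hL : forall a : alpha, #|alpha0 :&: [set a; tau a]| = 1%N.

Local Notation peq := (peq tau alpha0).
Local Notation Fw := (Fw tau alpha0).
Local Notation sgn := (sgn tau).
Local Notation gen := (gen tau alpha0).

Definition clsB (N P : seq alpha) : piT alpha :=
  [ffun b => \sum_(y <- P) gen y b - \sum_(y <- N) gen y b].
Definition negpi (g : piT alpha) : piT alpha := [ffun b => - g b].

Definition Fblock (h : alpha) (N P : seq alpha) (a : alpha) (x : piT alpha) : int :=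
  sgn a h * bz (peq (clsB N P) x) + \sum_(y <- N) sgn a y * bz (peq (gen h) x)
  + \sum_(y <- P) sgn a y * bz (peq (negpi (gen h)) x).

Variables (h : alpha) (N P : seq alpha).
Local Notation n := (size N).
Local Notation m := (size P).
Definition BA := (unit + ('I_n + 'I_m))%type.
Definition hd : BA := inl tt.
Definition sN : seq BA := [seq inr (inl i) | i <- enum 'I_n].
Definition sP : seq BA := [seq inr (inr j) | j <- enum 'I_m].
Definition labB (z : BA) : alpha :=
  match z with inl _ => h | inr (inl i) => nth h N i | inr (inr j) => nth h P j end.
Definition wB := bw sN sP hd.

Lemma inN i : (inr (inl i) : BA) \in sN.
Proof. by rewrite /sN; apply/mapP; exists i; rewrite ?mem_enum. Qed.
Lemma inP j : (inr (inr j) : BA) \in sP.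
Proof. by rewrite /sP; apply/mapP; exists j; rewrite ?mem_enum. Qed.

Lemma uNP : uniq (sN ++ sP).
Proof.
rewrite cat_uniq; apply/and3P; split.
- rewrite map_inj_uniq ?enum_uniq // => i j [] //.
- apply/hasPn => z /mapP[j _ ->]; apply/mapP => [[i _]] //.
- rewrite map_inj_uniq ?enum_uniq // => i j [] //.
Qed.

Lemma hdNP : hd \notin sN ++ sP.
Proof. by rewrite mem_cat negb_or; apply/andP; split; apply/mapP => [[i _]]. Qed.

Lemma wB_nano : is_nanoword wB.
Proof.
apply/forallP => [[[]|[i|j]]]; apply/eqP.
- by have := bw_count_X uNP hdNP.
- by have := bw_count_s uNP hdNP (inN i).
- by have := bw_count_t uNP hdNP (inP j).
Qed.

Lemma class_hd : letter_class tau alpha0 labB wB hd = clsB N P.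
Proof.
apply/ffunP => b; rewrite [LHS]ffunE [RHS]ffunE big_sumType sum_unit /= big_sumType /=.
rewrite nw_self mul0r add0r addrC; congr (_ + _).
  rewrite -(sum_nth h); apply: eq_bigr => j _.
  by rewrite (bw_Xt uNP hdNP (inP j)) mul1r.
rewrite -(sum_nth h) -sumrN; apply: eq_bigr => i _.
by rewrite (bw_Xs uNP hdNP (inN i)) mulN1r.
Qed.

Lemma class_N i : letter_class tau alpha0 labB wB (inr (inl i)) = gen h.
Proof.
apply/ffunP => b; rewrite [LHS]ffunE big_sumType sum_unit /= big_sumType /=.
rewrite nw_anti (bw_Xs uNP hdNP (inN i)) opprK mul1r.
rewrite !big1 ?addr0 // => z _.
  by rewrite (bw_st uNP hdNP (inN i) (inP z)) mul0r.
by rewrite (bw_ss uNP hdNP (inN i) (inN z)) mul0r.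
Qed.

Lemma class_P j : letter_class tau alpha0 labB wB (inr (inr j)) = negpi (gen h).
Proof.
apply/ffunP => b; rewrite [LHS]ffunE [RHS]ffunE big_sumType sum_unit /= big_sumType /=.
rewrite nw_anti (bw_Xt uNP hdNP (inP j)) mulN1r.
rewrite !big1 ?addr0 // => z _.
  by rewrite (bw_tt uNP hdNP (inP j) (inP z)) mul0r.
by rewrite nw_anti (bw_st uNP hdNP (inN z) (inP j)) oppr0 mul0r.
Qed.

Lemma Fw_block a x : Fw labB wB a x = Fblock h N P a x.
Proof.
rewrite /Fw big_sumType sum_unit big_sumType /= /Fblock -addrA.
rewrite -/hd class_hd; congr (_ + (_ + _)).
  rewrite -(sum_nth h); apply: eq_bigr => i _; by rewrite class_N.
rewrite -(sum_nth h); apply: eq_bigr => j _; by rewrite class_P.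
Qed.

Lemma Rf_block : Rf tau alpha0 (Fblock h N P).
Proof.
exists BA, labB, wB; split; first exact: wB_nano.
by move=> a _ x _; rewrite Fw_block subrr dvdz0.
Qed.

End Block.

Definition posp (z : int) : nat := match z with Posz n => n | Negz _ => 0%N end.
Definition negp (z : int) : nat := match z with Posz _ => 0%N | Negz n => n.+1 end.

Lemma posp_negp z : z = (posp z)%:Z - (negp z)%:Z.
Proof. by case: z => n; rewrite /= ?subr0 // NegzE add0r. Qed.

Lemma sum_nseq (T : Type) (k : nat) (b : T) (F : T -> int) :
  \sum_(y <- nseq k b) F y = k%:Z * F b.
Proof.
elim: k => [|k IH]; first by rewrite big_nil mul0r.
by rewrite /= big_cons IH intS mulrDl mul1r.
Qed.

Section Main.
Variable alpha : finType.
Variable tau : alpha -> alpha.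
Variable alpha0 : {set alpha}.
Hypothesis tauK : involutive tau.
Hypothesis hL : forall a : alpha, #|alpha0 :&: [set a; tau a]| = 1%N.

Local Notation peq := (peq tau alpha0).
Local Notation md := (md tau).
Local Notation sgn := (sgn tau).
Local Notation gen := (gen tau alpha0).
Local Notation Fblock := (Fblock tau alpha0).
Local Notation clsB := (clsB tau alpha0).
Local Notation Rf := (Rf tau alpha0).

Definition Lq := enum alpha0.

Lemma sum_pick (F : alpha -> int) a : a \in alpha0 ->
  \sum_(b <- Lq) bz (b == a) * F b = F a.
Proof.
move=> ha; rewrite /Lq big_enum /= (bigD1 a) //= eqxx mul1r big1 ?addr0 // => b /andP[_ nb].
by rewrite (negbTE nb) mul0r.
Qed.

Definition Nn (g : piT alpha) : seq alpha := flatten [seq nseq (negp (g b)) b | b <- Lq].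
Definition Pp (g : piT alpha) : seq alpha := flatten [seq nseq (posp (g b)) b | b <- Lq].

Lemma sum_Nn g (F : alpha -> int) : \sum_(y <- Nn g) F y = \sum_(b <- Lq) (negp (g b))%:Z * F b.
Proof. by rewrite /Nn big_flatten /= big_map; apply: eq_bigr => b _; rewrite sum_nseq. Qed.

Lemma sum_Pp g (F : alpha -> int) : \sum_(y <- Pp g) F y = \sum_(b <- Lq) (posp (g b))%:Z * F b.
Proof. by rewrite /Pp big_flatten /= big_map; apply: eq_bigr => b _; rewrite sum_nseq. Qed.

Lemma sum_Lq_pick (F : alpha -> int) a : a \in alpha0 ->
  \sum_(b <- Lq) F b * bz (b == a) = F a.
Proof. by move=> ha; rewrite -(sum_pick F ha); apply: eq_bigr => b _; rewrite mulrC. Qed.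

Lemma sgn_L a c : a \in alpha0 -> c \in alpha0 -> sgn a c = bz (c == a).
Proof.
move=> ha hc; rewrite /sgn; case: ifP => hta; first by rewrite subr0.
have -> : (c == tau a) = false.
  apply/negbTE; apply: contraFneq hta => e; subst c; apply/eqP; exact: Lboth.
by rewrite subr0.
Qed.

Lemma gen_L c b : c \in alpha0 -> gen c b = bz (b == c).
Proof. by move=> hc; rewrite /gen ffunE hc. Qed.

Lemma mem_Lq b : (b \in Lq) = (b \in alpha0).
Proof. by rewrite /Lq mem_enum. Qed.

Lemma cls_NP g : peq (clsB (Nn g) (Pp g)) g.
Proof.
apply/forall_inP => b hb; rewrite eqR_dvd ffunE.
rewrite sum_Nn sum_Pp.
rewrite (eq_big_seq (fun c => bz (c == b) * (posp (g c))%:Z)); last first.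
  by move=> c; rewrite mem_Lq => hc; rewrite gen_L // eq_sym mulrC.
rewrite [X in _ - X - _](eq_big_seq (fun c => bz (c == b) * (negp (g c))%:Z)); last first.
  by move=> c; rewrite mem_Lq => hc; rewrite gen_L // eq_sym mulrC.
by rewrite !sum_pick // -posp_negp subrr dvdz0.
Qed.


Variable x : piT alpha.
Definition Ic (c : alpha) : int := bz (peq (negpi (gen c)) x).
Definition Jc (c : alpha) : int := bz (peq (gen c) x).

Lemma FT_eval a c g : a \in alpha0 -> c \in alpha0 ->
  Fblock c (Nn g) (Pp g) a x =
  bz (c == a) * bz (peq g x) + (negp (g a))%:Z * Jc c + (posp (g a))%:Z * Ic c.
Proof.
move=> ha hc; rewrite /Fblock sgn_L // (peq_l _ (cls_NP g)) -!mulr_suml sum_Nn sum_Pp.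
rewrite (eq_big_seq (fun b => (negp (g b))%:Z * bz (b == a))); last first.
  by move=> b; rewrite mem_Lq => hb; rewrite sgn_L.
rewrite [X in _ + _ + X * _](eq_big_seq (fun b => (posp (g b))%:Z * bz (b == a))); last first.
  by move=> b; rewrite mem_Lq => hb; rewrite sgn_L.
by rewrite !sum_Lq_pick.
Qed.

Lemma cls1 c : clsB [:: c] [::] = negpi (gen c).
Proof. by apply/ffunP => b; rewrite [LHS]ffunE [RHS]ffunE big_nil big_seq1 sub0r. Qed.

Lemma cls2 c : clsB [::] [:: c] = gen c.
Proof. by apply/ffunP => b; rewrite [LHS]ffunE big_nil big_seq1 subr0. Qed.

Lemma peq_negtau c : peq (negpi (gen (tau c))) (gen c).
Proof.
apply/forall_inP => b hb; rewrite eqR_dvd [X in X - _]ffunE -opprD rpredN.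
exact: gen_tau.
Qed.

Lemma peq_tau c : peq (gen (tau c)) (negpi (gen c)).
Proof.
apply/forall_inP => b hb; rewrite eqR_dvd [X in _ - X]ffunE opprK.
exact: gen_tau.
Qed.

Lemma sgn_tauL a c : a \in alpha0 -> c \in alpha0 -> (md a %| sgn a (tau c) + bz (c == a))%Z.
Proof. by move=> ha hc; rewrite -sgn_L //; apply: sgn_tau. Qed.

Lemma FS1_eval a b c : a \in alpha0 -> b \in alpha0 -> c \in alpha0 ->
  Fblock b [:: c] [::] a x = bz (b == a) * Ic c + bz (c == a) * Jc b.
Proof.
move=> ha hb hc; rewrite /Fblock cls1 big_nil addr0 big_seq1 !sgn_L //.
Qed.

Lemma FS2_eval a b c : a \in alpha0 -> b \in alpha0 -> c \in alpha0 ->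
  (md a %| Fblock b [:: tau c] [::] a x - (bz (b == a) * Jc c - bz (c == a) * Jc b))%Z.
Proof.
move=> ha hb hc; rewrite /Fblock cls1 big_nil addr0 big_seq1 sgn_L //.
rewrite (peq_l _ (peq_negtau c)) /Jc.
rewrite -/(Jc c).
have -> : bz (b == a) * Jc c + sgn a (tau c) * Jc b - (bz (b == a) * Jc c - bz (c == a) * Jc b)
  = (sgn a (tau c) + bz (c == a)) * Jc b by ring.
exact: dvdz_mulr (sgn_tauL ha hc).
Qed.

Lemma FG_eval a b c : a \in alpha0 -> b \in alpha0 -> c \in alpha0 ->
  (md a %| Fblock b [::] [:: tau c] a x - (bz (b == a) * Ic c - bz (c == a) * Ic b))%Z.
Proof.
move=> ha hb hc; rewrite /Fblock cls2 big_nil addr0 big_seq1 sgn_L //.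
rewrite (peq_l _ (peq_tau c)) -/(Ic c) -/(Ic b).
have -> : bz (b == a) * Ic c + sgn a (tau c) * Ic b - (bz (b == a) * Ic c - bz (c == a) * Ic b)
  = (sgn a (tau c) + bz (c == a)) * Ic b by ring.
exact: dvdz_mulr (sgn_tauL ha hc).
Qed.

End Main.

Section Suff.
Variable alpha : finType.
Variable tau : alpha -> alpha.
Variable alpha0 : {set alpha}.
Hypothesis tauK : involutive tau.
Hypothesis hL : forall a : alpha, #|alpha0 :&: [set a; tau a]| = 1%N.
Variable u : alpha -> grpring alpha.

Local Notation peq := (peq tau alpha0).
Local Notation md := (md tau).
Local Notation mdd := (mdd tau).
Local Notation sgn := (sgn tau).
Local Notation gen := (gen tau alpha0).
Local Notation Fblock := (Fblock tau alpha0).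
Local Notation Rf := (Rf tau alpha0).
Local Notation Lq := (Lq alpha0).
Local Notation Nn := (Nn alpha0).
Local Notation Pp := (Pp alpha0).
Local Notation coef := (coef tau alpha0).

Definition kk c b := partial b (u c).
Definition nn c b := \sum_(e <- u c) e.2 * (negp (e.1 b))%:Z.
Definition pp c b := \sum_(e <- u c) e.2 * (posp (e.1 b))%:Z.

Lemma kk_pn c b : kk c b = pp c b - nn c b.
Proof.
rewrite /kk /partial /pp /nn -sumrB; apply: eq_bigr => e _.
by rewrite -mulrBr -posp_negp.
Qed.

Definition ch (c b : alpha) : bool :=
  if (tau c == c) == (tau b == b) then (enum_rank c < enum_rank b)%N else (tau c == c).
Definition cnd c b := (c != b) && ch c b.

Lemma ch_anti c b : c != b -> ch b c = ~~ ch c b.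
Proof.
move=> ncb; rewrite /ch eq_sym; case: ifP => e.
  by rewrite ltnNge leq_eqVlt val_eqE (inj_eq enum_rank_inj) (negbTE ncb).
by move: e; case: (tau c == c); case: (tau b == b).
Qed.

Lemma md_mdd a c : ch a c -> (md a %| mdd a c)%Z.
Proof.
rewrite /ch /md /mdd; case: (tau a == a); case: (tau c == c) => //= _; exact: dvdzz.
Qed.

Definition fT a x := \sum_(c <- Lq) \sum_(e <- u c) e.2 * Fblock c (Nn e.1) (Pp e.1) a x.
Definition fS a x := \sum_(c <- Lq) \sum_(b <- Lq)
   (- nn c b) * (Fblock b [:: c] [::] a x + Fblock b [:: tau c] [::] a x).
Definition fG a x := \sum_(c <- Lq) \sum_(b <- Lq)
   (if cnd c b then (- kk c b) * Fblock b [::] [:: tau c] a x else 0).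

Lemma Rf_all : Rf (fun a x => fT a x + fS a x + fG a x).
Proof.
apply: RfD; first apply: RfD.
- apply: Rf_sum => c; apply: Rf_sum => e; apply: (RfM tauK hL); exact: Rf_block.
- apply: Rf_sum => c; apply: Rf_sum => b; apply: (RfM tauK hL); apply: RfD; exact: Rf_block.
- apply: Rf_sum => c; apply: Rf_sum => b; case: (cnd c b).
    apply: (RfM tauK hL); exact: Rf_block.
  exact: Rf0.
Qed.


Lemma bz_true : bz true = 1. Proof. by []. Qed.
Lemma bz_false : bz false = 0. Proof. by []. Qed.

Lemma coef_bz (y : grpring alpha) x : coef y x = \sum_(e <- y) e.2 * bz (peq e.1 x).
Proof.
rewrite /coef big_mkcond; apply: eq_bigr => e _.
by rewrite -/(peq e.1 x); case: (peq e.1 x); rewrite ?bz_true ?bz_false ?mulr1 ?mulr0.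
Qed.

Variable x : piT alpha.
Local Notation Ic := (Ic tau alpha0 x).
Local Notation Jc := (Jc tau alpha0 x).

Lemma fT_eval a : a \in alpha0 ->
  fT a x = coef (u a) x + \sum_(c <- Lq) (nn c a * Jc c + pp c a * Ic c).
Proof.
move=> ha.
have inner : forall c, c \in Lq -> \sum_(e <- u c) e.2 * Fblock c (Nn e.1) (Pp e.1) a x =
   bz (c == a) * coef (u c) x + (nn c a * Jc c + pp c a * Ic c).
  move=> c; rewrite mem_Lq => hc.
  rewrite (eq_bigr (fun e => e.2 * (bz (c == a) * bz (peq e.1 x) + (negp (e.1 a))%:Z * Jc c
        + (posp (e.1 a))%:Z * Ic c))); last by move=> e _; rewrite FT_eval.
  rewrite coef_bz /nn /pp mulr_sumr !mulr_suml -!big_split; apply: eq_bigr => e _ /=.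
  ring.
rewrite /fT (eq_big_seq _ inner) big_split /=; congr (_ + _).
exact: sum_pick.
Qed.

Lemma fS_eval a : a \in alpha0 ->
  (md a %| fS a x - (- \sum_(c <- Lq) nn c a * (Jc c + Ic c)))%Z.
Proof.
move=> ha.
have step1 : (md a %| fS a x - \sum_(c <- Lq) \sum_(b <- Lq) (- nn c b) * (bz (b == a) * (Ic c + Jc c)))%Z.
  rewrite /fS -sumrB big_seq; apply: rpred_sum => c; rewrite mem_Lq => hc.
  rewrite -sumrB big_seq; apply: rpred_sum => b; rewrite mem_Lq => hb.
  rewrite -mulrBr; apply: dvdz_mull.
  rewrite FS1_eval //; have := FS2_eval tauK hL x ha hb hc.
  set F2 := Fblock b [:: tau c] [::] a x.
  have -> : bz (b == a) * Ic c + bz (c == a) * Jc b + F2 - bz (b == a) * (Ic c + Jc c)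
     = F2 - (bz (b == a) * Jc c - bz (c == a) * Jc b) by ring.
  by [].
apply: dvdz_sub_trans step1 _.
rewrite -sumrN -sumrB rpred_sum // => c _.
rewrite (eq_bigr (fun b => bz (b == a) * (- nn c b * (Ic c + Jc c)))); last by move=> b _; ring.
rewrite (sum_pick (fun b => - nn c b * (Ic c + Jc c))) //.
have -> : - nn c a * (Ic c + Jc c) - - (nn c a * (Jc c + Ic c)) = 0 by ring.
exact: dvdz0.
Qed.

Lemma fG_eval a : a \in alpha0 ->
  (md a %| fG a x - (\sum_(c <- Lq) - (bz (cnd c a) * kk c a * Ic c)
                     + \sum_(c <- Lq) bz (cnd a c) * kk a c * Ic c))%Z.
Proof.
move=> ha.
have step1 : (md a %| fG a x - \sum_(c <- Lq) \sum_(b <- Lq)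
     (bz (cnd c b) * (- kk c b) * (bz (b == a) * Ic c - bz (c == a) * Ic b)))%Z.
  rewrite /fG -sumrB big_seq; apply: rpred_sum => c; rewrite mem_Lq => hc.
  rewrite -sumrB big_seq; apply: rpred_sum => b; rewrite mem_Lq => hb.
  case: (cnd c b); rewrite ?bz_true ?bz_false ?mul1r ?mul0r ?subrr ?dvdz0 //.
  rewrite -mulrBr; apply: dvdz_mull; exact: FG_eval.
apply: dvdz_sub_trans step1 _.
have -> : \sum_(c <- Lq) \sum_(b <- Lq)
     (bz (cnd c b) * (- kk c b) * (bz (b == a) * Ic c - bz (c == a) * Ic b)) =
   \sum_(c <- Lq) \sum_(b <- Lq) bz (b == a) * (- (bz (cnd c b) * kk c b * Ic c))
   + \sum_(b <- Lq) \sum_(c <- Lq) bz (c == a) * (bz (cnd c b) * kk c b * Ic b).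
  rewrite [X in _ = _ + X]exchange_big -big_split; apply: eq_bigr => c _.
  rewrite -big_split; apply: eq_bigr => b _ /=; ring.
rewrite (eq_bigr (fun c => - (bz (cnd c a) * kk c a * Ic c))); last first.
  by move=> c _; rewrite (sum_pick (fun b => - (bz (cnd c b) * kk c b * Ic c))).
rewrite [X in _ + X - _](eq_bigr (fun b => bz (cnd a b) * kk a b * Ic b)); last first.
  by move=> b _; rewrite (sum_pick (fun c => bz (cnd c b) * kk c b * Ic b)).
by rewrite subrr dvdz0.
Qed.

End Suff.

Section Suff2.
Variable alpha : finType.
Variable tau : alpha -> alpha.
Variable alpha0 : {set alpha}.
Hypothesis tauK : involutive tau.
Hypothesis hL : forall a : alpha, #|alpha0 :&: [set a; tau a]| = 1%N.
Variable u : alpha -> grpring alpha.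
Hypothesis h1 : forall a, a \in alpha0 -> eqRR tau a a (partial a (u a)) 0.
Hypothesis h2 : forall a b, a \in alpha0 -> b \in alpha0 ->
     eqRR tau a b (partial a (u b) + partial b (u a)) 0.

Local Notation md := (md tau).
Local Notation kk := (kk u).
Local Notation cnd := (cnd tau).

Lemma coeff_dvd a c : a \in alpha0 -> c \in alpha0 ->
  (md a %| kk c a - bz (cnd c a) * kk c a + bz (cnd a c) * kk a c)%Z.
Proof.
move=> ha hc; case: (eqVneq c a) => [->|nca].
  rewrite /cnd eqxx /= bz_false !mul0r subr0 addr0.
  have := h1 ha; rewrite eqRR_dvd subr0 /mdd /md.
  by case: (tau a == a).
have hac : cnd a c = ~~ cnd c a by rewrite /cnd nca eq_sym nca /= ch_anti.
rewrite hac; case hca: (cnd c a); rewrite ?bz_true ?bz_false /=.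
  by rewrite mul1r mul0r addr0 subrr dvdz0.
rewrite mul0r subr0 mul1r.
have hch : ch tau a c by move: hac; rewrite hca /cnd => /andP[].
apply: dvdz_trans (md_mdd hch) _.
by have := h2 ha hc; rewrite eqRR_dvd subr0 /kk.
Qed.

Lemma Rf_coef : Rf tau alpha0 (fun a x => coef tau alpha0 (u a) x).
Proof.
apply: (RfE (Rf_all tauK hL u)) => a ha x.
have e1 := fT_eval hL u x ha.
have e2 := fS_eval tauK hL u x ha.
have e3 := fG_eval tauK hL u x ha.
rewrite e1.
set S1 := \sum_(c <- Lq alpha0) _.
set S2 := - \sum_(c <- Lq alpha0) _ in e2.
set S3 := (X in fG _ _ _ _ _ - X) in e3.
have -> : coef tau alpha0 (u a) x + S1 + fS tau alpha0 u a x + fG tau alpha0 u a x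
    - coef tau alpha0 (u a) x =
  (S1 + S2 + S3) + (fS tau alpha0 u a x - S2) + (fG tau alpha0 u a x - S3) by ring.
apply: rpredD; last exact: e3.
apply: rpredD; last exact: e2.
have -> : S1 + S2 + S3 = \sum_(c <- Lq alpha0)
   (kk c a - bz (cnd c a) * kk c a + bz (cnd a c) * kk a c) * Ic tau alpha0 x c.
  rewrite /S1 /S2 /S3 -sumrN -!big_split /=; apply: eq_bigr => c _.
  rewrite kk_pn /=; ring.
rewrite big_seq; apply: rpred_sum => c; rewrite mem_Lq => hc.
exact: dvdz_mulr (coeff_dvd ha hc).
Qed.

End Suff2.

Section Nec.
Variable alpha : finType.
Variable tau : alpha -> alpha.
Variable alpha0 : {set alpha}.
Hypothesis tauK : involutive tau.
Hypothesis hL : forall a : alpha, #|alpha0 :&: [set a; tau a]| = 1%N.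

Local Notation peq := (peq tau alpha0).
Local Notation md := (md tau).
Local Notation mdd := (mdd tau).
Local Notation sgn := (sgn tau).
Local Notation gen := (gen tau alpha0).
Local Notation coef := (coef tau alpha0).

Lemma dvd_phi (m : int) (phi : piT alpha -> int) :
  (forall g g', peq g g' -> (m %| phi g - phi g')%Z) ->
  forall D : grpring alpha, (forall g, (m %| coef D g)%Z) ->
  (m %| \sum_(e <- D) e.2 * phi e.1)%Z.
Proof.
move=> hphi D; have [n] := ubnP (size D).
elim: n D => [|n IH] D hs hD; first by [].
case: D hs hD => [|e0 D'] hs hD; first by rewrite big_nil dvdz0.
set D := e0 :: D' in hD *.
rewrite (bigID (fun e => peq e.1 e0.1)) /=; apply: rpredD.
  have -> : \sum_(e <- D | peq e.1 e0.1) e.2 * phi e.1 =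
     \sum_(e <- D | peq e.1 e0.1) e.2 * (phi e.1 - phi e0.1) + coef D e0.1 * phi e0.1.
    rewrite /Defs.coef mulr_suml -big_split /=; apply: eq_bigr => e _; ring.
  apply: rpredD; last exact: dvdz_mulr (hD _).
  by apply: rpred_sum => e he; apply: dvdz_mull; apply: hphi.
rewrite -big_filter; apply: IH.
  rewrite /D /= peq_refl /=; move: hs; rewrite /= ltnS; apply: leq_ltn_trans.
  by rewrite size_filter count_size.
move=> g; rewrite /Defs.coef big_filter_cond /=.
case hg: (peq g e0.1).
  rewrite big_pred0 ?dvdz0 // => e /=.
  case he: (pi_eq tau alpha0 e.1 g); rewrite ?andbF // andbT.
  by apply/negbF; exact: peq_trans he hg.
have -> : \sum_(i <- D | ~~ peq i.1 e0.1 && pi_eq tau alpha0 i.1 g) i.2 =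
  \sum_(i <- D | pi_eq tau alpha0 i.1 g) i.2; last exact: hD g.
apply: eq_bigl => e /=.
case he: (pi_eq tau alpha0 e.1 g); rewrite ?andbF //= andbT.
apply/negP => he0; move/negbT: hg; apply/negP; rewrite negbK.
have he' : peq g e.1 by rewrite peq_sym; exact: he.
exact: peq_trans he' he0.
Qed.


Lemma mdd_r a b : (mdd a b %| md b)%Z.
Proof. by rewrite /mdd /md; case: (tau b == b); rewrite ?andbF ?andbT ?dvdzz ?dvdz0. Qed.

Lemma mdd_l a b : (mdd a b %| md a)%Z.
Proof. by rewrite /mdd /md; case: (tau a == a); rewrite ?dvdzz ?dvdz0. Qed.

Lemma mdd_sym a b : mdd a b = mdd b a.
Proof. by rewrite /mdd andbC. Qed.

Lemma partial_cat b (y z : grpring alpha) : partial b (y ++ z) = partial b y + partial b z.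
Proof. by rewrite /partial big_cat. Qed.

Lemma partial_neg b (y : grpring alpha) : partial b [seq (e.1, - e.2) | e <- y] = - partial b y.
Proof. by rewrite /partial big_map -sumrN; apply: eq_bigr => e _; rewrite mulNr. Qed.

Lemma transfer a b (z y : grpring alpha) : b \in alpha0 ->
  gr_eq tau alpha0 a z y -> (mdd a b %| partial b z - partial b y)%Z.
Proof.
move=> hb hzy.
have -> : partial b z - partial b y = partial b (z ++ [seq (e.1, - e.2) | e <- y]).
  by rewrite partial_cat partial_neg.
apply: (dvd_phi (phi := fun g => g b)).
  move=> g g' /forall_inP /(_ b hb); rewrite eqR_dvd => h.
  exact: dvdz_trans (mdd_r a b) h.
move=> g; rewrite coef_cat coef_neg.
apply: dvdz_trans (mdd_l a b) _; rewrite -eqR_dvd; exact: hzy.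
Qed.

Lemma coef_bracket_triv (A : finType) (lab : A -> alpha) (w : seq A) c g :
  peq g (pi_one alpha) -> coef (bracket tau alpha0 lab w c) g = 0.
Proof.
move=> hg; rewrite /Defs.coef /bracket big_map big_filter_cond /=.
rewrite big_pred0 // => X; apply/negbTE; rewrite negb_and orbC.
case h: (pi_eq _ _ _ g) => //=; rewrite negb_and negbK orbC.
apply/orP; left; exact: peq_trans h hg.
Qed.

Lemma coef_selflink_triv (A : finType) (lab : A -> alpha) (w : seq A) a g :
  peq g (pi_one alpha) -> coef (selflink tau alpha0 lab w a) g = 0.
Proof.
move=> hg; rewrite /selflink; case: ifP => _; first exact: coef_bracket_triv.
by rewrite coef_cat coef_neg !coef_bracket_triv // oppr0 addr0.
Qed.



Lemma gen_sgn b y : b \in alpha0 -> gen y b = sgn b y.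
Proof.
move=> hb; rewrite /gen ffunE /sgn /bz.
case hy: (y \in alpha0).
  rewrite eq_sym; case: ifP => htb; first by rewrite subr0.
  have -> : (y == tau b) = false.
    apply/negbTE; apply: contraFneq htb => e; subst y; apply/eqP; exact: Lboth.
  by rewrite subr0.
have -> : (y == b) = false by apply/negbTE; apply: contraFneq hy => ->.
rewrite sub0r; case: ifP => [/eqP htb|_].
  have -> : (b == tau y) = false.
    apply/negbTE; apply: contraFneq hy => e; by rewrite -[y]tauK -e htb.
  by [].
by rewrite eq_sym (inv_eq tauK).
Qed.

Section Word.
Variables (A : finType) (lab : A -> alpha) (w : seq A).
Local Notation cls := (letter_class tau alpha0 lab w).

Definition Mab a b := \sum_(X : A) \sum_(Y : A) sgn a (lab X) * (nw w X Y * sgn b (lab Y)).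

Lemma partial_bracket b c : partial b (bracket tau alpha0 lab w c) =
  \sum_(X : A) bz (lab X == c) * (bz (~~ peq (cls X) (pi_one alpha)) * cls X b).
Proof.
rewrite /partial /bracket big_map big_filter enumT [index_enum A]unlock /=.
rewrite big_mkcond; apply: eq_bigr => X _ /=.
rewrite -/(peq (cls X) (pi_one alpha)); case: (lab X == c); case: (peq (cls X) (pi_one alpha)); by rewrite /= ?bz_true ?bz_false ?mul1r ?mul0r.
Qed.

Lemma Mab_anti a b : Mab a b + Mab b a = 0.
Proof.
rewrite /Mab [X in _ + X]exchange_big -big_split big1 // => X _.
rewrite -big_split big1 // => Y _ /=; rewrite (nw_anti w X Y); ring.
Qed.

Lemma partial_selflink a b : b \in alpha0 ->
  (mdd a b %| partial b (selflink tau alpha0 lab w a) - Mab a b)%Z.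
Proof.
move=> hb.
have hM : Mab a b = \sum_(X : A) sgn a (lab X) * cls X b.
  rewrite /Mab; apply: eq_bigr => X _; rewrite ffunE mulr_sumr; apply: eq_bigr => Y _.
  by rewrite gen_sgn.
have hP : partial b (selflink tau alpha0 lab w a) =
   \sum_(X : A) sgn a (lab X) * (bz (~~ peq (cls X) (pi_one alpha)) * cls X b).
  rewrite /selflink /sgn; case: ifP => ha.
    by rewrite partial_bracket; apply: eq_bigr => X _; rewrite subr0.
  rewrite partial_cat partial_neg !partial_bracket -sumrB; apply: eq_bigr => X _.
  by rewrite mulrBl.
rewrite hP hM -sumrB rpred_sum // => X _; rewrite -mulrBr dvdz_mull //.
case: (boolP (peq (cls X) (pi_one alpha))) => ht /=.
  rewrite bz_false mul0r sub0r rpredN; apply: dvdz_trans (mdd_r a b) _.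
  by move/forall_inP: ht => /(_ b hb); rewrite eqR_dvd [X in _ - X]ffunE subr0.
by rewrite bz_true mul1r subrr dvdz0.
Qed.

End Word.
End Nec.

Theorem main_thm (alpha : finType) (tau : alpha -> alpha) (alpha0 : {set alpha}) :
  involutive tau ->
  (forall a : alpha, #|alpha0 :&: [set a; tau a]| = 1%N) ->
  forall u : alpha -> grpring alpha,
    realizable tau alpha0 u <-> skew_symmetric tau alpha0 u.
Proof.
move=> tauK hL u; split.
  case=> A [lab [w [nano hw]]].
  have hMa : forall a, Mab tau lab w a a = 0.
    move=> a; have := Mab_anti tau lab w a a.
    by move/eqP; rewrite -mulr2n mulrn_eq0 /= => /eqP.
  split.
    move=> a ha; split.
      rewrite eqR_dvd subr0 /delta.
      have := hw a ha (pi_one alpha); rewrite eqR_dvd coef_selflink_triv ?subr0 //.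
      exact: peq_refl.
    rewrite eqRR_dvd subr0.
    have t1 := transfer ha (hw a ha).
    have t2 := partial_selflink tauK hL lab w a ha.
    rewrite hMa subr0 in t2.
    have -> : partial a (u a) = (partial a (u a) - partial a (selflink tau alpha0 lab w a))
        + partial a (selflink tau alpha0 lab w a) by rewrite subrK.
    exact: rpredD.
  move=> a b ha hb; rewrite eqRR_dvd subr0.
  have t1 := transfer ha (hw b hb).
  have t2 := transfer hb (hw a ha).
  have t3 := partial_selflink tauK hL lab w b ha.
  have t4 := partial_selflink tauK hL lab w a hb.
  rewrite mdd_sym in t1 t3.
  have := Mab_anti tau lab w a b => hab.
  have -> : partial a (u b) + partial b (u a) =
    (partial a (u b) - partial a (selflink tau alpha0 lab w b))
    + (partial b (u a) - partial b (selflink tau alpha0 lab w a))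
    + (partial a (selflink tau alpha0 lab w b) - Mab tau lab w b a)
    + (partial b (selflink tau alpha0 lab w a) - Mab tau lab w a b)
    + (Mab tau lab w a b + Mab tau lab w b a) by ring.
  rewrite hab addr0; apply: rpredD; last exact: t4.
  apply: rpredD; last exact: t3.
  by apply: rpredD.
case=> hs1 hs2.
have h1 : forall a, a \in alpha0 -> eqRR tau a a (partial a (u a)) 0 by move=> a ha; case: (hs1 a ha).
case: (Rf_coef tauK hL h1 hs2) => A [lab [w [nano hw]]].
exists A, lab, w; split => // a ha g.
rewrite eqR_dvd; case: (boolP (peq tau alpha0 g (pi_one alpha))) => hg.
  rewrite coef_selflink_triv // subr0 (coef_peq _ hg).
  by case: (hs1 a ha); rewrite eqR_dvd subr0.
rewrite coef_selflink //; exact: hw.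
Qed.


Close Scope ring_scope.

Theorem theorem6p2 (alpha : finType) (tau : alpha -> alpha) (alpha0 : {set alpha}) :
  involutive tau ->
  (forall a : alpha, #|alpha0 :&: [set a; tau a]| = 1%N) ->
  forall u : alpha -> grpring alpha,
    realizable tau alpha0 u <-> skew_symmetric tau alpha0 u.
Proof. exact: main_thm. Qed.
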